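(* Let $\mathbf{Z}\in\mathbb{R}^{n\times d}$ and $\lambda\geq 0$, and assume that $\lambda>0$ or that $\mathbf{Z}$ has full column rank. Let $s_{\lambda}(\mathbf{Z}):=\mathrm{Tr}\big((\mathbf{Z}^{T}\mathbf{Z}+\lambda\mathbf{I}_d)^{-1}\mathbf{Z}^{T}\mathbf{Z}\big)$. Let $\delta\in(0,1)$ and let $\mathbf{S}\in\mathbb{R}^{s\times n}$ be a CountSketch matrix with $s\geq 20\,s_{\lambda}(\mathbf{Z})^{2}/\delta$. Then with probability at least $1-\delta$, all generalized eigenvalues of the pencil $(\mathbf{Z}^{T}\mathbf{Z}+\lambda\mathbf{I}_d,\ \mathbf{Z}^{T}\mathbf{S}^{T}\mathbf{S}\mathbf{Z}+\lambda\mathbf{I}_d)$ lie in the interval $[1/2,3/2]$, and $\kappa(\mathbf{Z}^{T}\mathbf{Z}+\lambda\mathbf{I}_d,\ \mathbf{Z}^{T}\mathbf{S}^{T}\mathbf{S}\mathbf{Z}+\lambda\mathbf{I}_d)\leq 3$.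
   Context: A CountSketch matrix $\mathbf{S}\in\mathbb{R}^{s\times n}$ is defined by a random hash function $h:\{1,\dots,n\}\to\{1,\dots,s\}$ and a random sign function $g:\{1,\dots,n\}\to\{-1,+1\}$: the $j$-th column of $\mathbf{S}$ has a single nonzero entry, equal to $g(j)$, in row $h(j)$; equivalently $(\mathbf{S}\mathbf{x})_i=\sum_{j:h(j)=i}g(j)x_j$. For a pencil $(\mathbf{A},\mathbf{B})$ with $\mathbf{B}$ symmetric positive definite, the generalized eigenvalues are the $\lambda$ with $\mathbf{A}\mathbf{v}=\lambda\mathbf{B}\mathbf{v}$ for some $\mathbf{v}\neq 0$, and $\kappa(\mathbf{A},\mathbf{B})$ denotes the ratio of the largest to the smallest generalized eigenvalue in absolute value (equal to $\kappa(\mathbf{B}^{-1/2}\mathbf{A}\mathbf{B}^{-1/2})$). *)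

(* Defs.v *)
From HB Require Import structures.
From mathcomp Require Import all_boot all_order all_algebra.
From mathcomp Require Import boolp classical_sets reals.
Set Implicit Arguments. Unset Strict Implicit. Unset Printing Implicit Defensive.
Import Order.TTheory GRing.Theory Num.Theory.
Local Open Scope ring_scope.

Definition countsketch (R : pzRingType) (s n : nat)
  (h : {ffun 'I_n -> 'I_s}) (g : {ffun 'I_n -> bool}) : 'M[R]_(s, n) :=
  \matrix_(i < s, j < n) (if h j == i then (if g j then 1 else -1) else 0).

Definition stat_dim (R : fieldType) (n d : nat) (Z : 'M[R]_(n, d)) (lam : R) : R :=
  \tr (invmx (Z^T *m Z + lam%:M) *m (Z^T *m Z)).

Definition gen_eig (R : pzRingType) (d : nat) (A B : 'M[R]_d) (mu : R) : Prop :=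
  exists v : 'cV[R]_d, v != 0 /\ A *m v = mu *: (B *m v).

Definition gen_kappa (R : realType) (d : nat) (A B : 'M[R]_d) : R :=
  sup [set `|mu| | mu in gen_eig A B] / inf [set `|mu| | mu in gen_eig A B].

(* The "good" event of Lemma 3.1 for a given sketch S: the pencil is a genuine
   pencil (second matrix invertible, it is symmetric PSD hence then SPD),
   all generalized eigenvalues lie in [1/2, 3/2], and kappa <= 3. *)
Definition good_event (R : realType) (n d s : nat) (Z : 'M[R]_(n, d)) (lam : R)
  (S : 'M[R]_(s, n)) : Prop :=
  let A := Z^T *m Z + lam%:M in
  let B := Z^T *m S^T *m S *m Z + lam%:M in
  [/\ B \in unitmx,
      (forall mu, gen_eig A B mu -> 1/2 <= mu <= 3/2)
    & gen_kappa A B <= 3].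

Definition countsketch_prob (R : realType) (n s : nat)
  (E : {ffun 'I_n -> 'I_s} -> {ffun 'I_n -> bool} -> Prop) : R :=
  #|[set hg : {ffun 'I_n -> 'I_s} * {ffun 'I_n -> bool} |
      asbool (E hg.1 hg.2)]|%:R
  / #|{: {ffun 'I_n -> 'I_s} * {ffun 'I_n -> bool}}|%:R.

(* Main.v *)
Require Import Defs.
From HB Require Import structures.
From mathcomp Require Import all_boot all_order all_algebra.
From mathcomp Require Import boolp classical_sets reals.
Import Order.TTheory GRing.Theory Num.Theory.
Local Open Scope ring_scope.
From mathcomp Require Import ring lra.
Set Implicit Arguments. Unset Strict Implicit.

Lemma sum_prod (R : comRingType) (I J : finType) (f : I -> R) (g : J -> R) :
  (\sum_i f i) * (\sum_j g j) = \sum_i \sum_j f i * g j.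
Proof. rewrite mulr_suml; apply: eq_bigr => i _; by rewrite mulr_sumr. Qed.

Lemma cauchy_schwarz (R : realFieldType) (I : finType) (x y : I -> R) :
  (\sum_i x i * y i) ^+ 2 <= (\sum_i x i ^+ 2) * (\sum_i y i ^+ 2).
Proof.
have H : 0 <= \sum_i \sum_j (x i * y j - x j * y i) ^+ 2.
  by apply: sumr_ge0 => i _; apply: sumr_ge0 => j _; exact: sqr_ge0.
have E : \sum_i \sum_j (x i * y j - x j * y i) ^+ 2 =
   2 * ((\sum_i x i ^+ 2) * (\sum_i y i ^+ 2) - (\sum_i x i * y i) ^+ 2).
  have E1 : \sum_i \sum_j (x i * y j - x j * y i) ^+ 2 =
     \sum_i \sum_j (x i ^+ 2 * y j ^+ 2) + \sum_i \sum_j (x j ^+ 2 * y i ^+ 2)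
     - 2 * \sum_i \sum_j (x i * y i) * (x j * y j).
    rewrite mulr_sumr -!big_split -sumrN -big_split /=; apply: eq_bigr => i _.
    rewrite mulr_sumr -!big_split -sumrN -big_split /=; apply: eq_bigr => j _.
    ring.
  rewrite E1 [in X in _ + X - _]exchange_big /= expr2 !sum_prod. ring.
have := H; rewrite E. nra.
Qed.

Lemma quadE (R : comRingType) N (M : 'M[R]_N) (y : 'cV_N) :
  (y^T *m M *m y) 0 0 = \sum_a y a 0 * (M *m y) a 0.
Proof. rewrite -mulmxA mxE; apply: eq_bigr => a _; by rewrite mxE. Qed.

Lemma normE (R : comRingType) N (y : 'cV[R]_N) : (y^T *m y) 0 0 = \sum_a y a 0 ^+ 2.
Proof. rewrite mxE; apply: eq_bigr => a _; by rewrite mxE expr2. Qed.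

Definition proj (R : comUnitRingType) N d (C : 'M[R]_(N, d)) := C *m invmx (C^T *m C) *m C^T.

Section Proj.
Variable R : comUnitRingType.
Variables (N d : nat) (C : 'M[R]_(N, d)).
Hypothesis AU : C^T *m C \in unitmx.

Lemma PC : proj C *m C = C.
Proof. by rewrite /proj -!mulmxA mulVmx // mulmx1. Qed.

Lemma Psym : (proj C)^T = proj C.
Proof. by rewrite /proj !trmx_mul trmxK trmx_inv trmx_mul trmxK mulmxA. Qed.

Lemma PP : proj C *m proj C = proj C.
Proof.
have CP : C^T *m proj C = C^T by rewrite -{1}Psym -trmx_mul PC.
by rewrite {1}/proj -mulmxA CP.
Qed.
End Proj.

Section Det.
Variable R : realFieldType.
Variables (N : nat) (P Dp : 'M[R]_N).
Hypothesis Dsym : Dp^T = Dp.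
Hypothesis Psy : P^T = P.
Hypothesis Pid : P *m P = P.

Lemma frobE : \tr (Dp *m P *m Dp *m P) = \sum_a \sum_b (P *m Dp *m P) a b ^+ 2.
Proof.
have T : (P *m Dp *m P)^T = P *m Dp *m P by rewrite !trmx_mul Psy Dsym mulmxA.
have -> : \tr (Dp *m P *m Dp *m P) = \tr ((P *m Dp *m P) *m (P *m Dp *m P)^T).
  rewrite T -!mulmxA.
  have PPX : forall X : 'M_N, P *m (P *m X) = P *m X by move=> X; rewrite mulmxA Pid.
  rewrite (PPX (Dp *m P)). rewrite [RHS]mxtrace_mulC -!mulmxA Pid //.
rewrite /mxtrace; apply: eq_bigr => a _; rewrite mxE; apply: eq_bigr => b _.
by rewrite [_^T b a]mxE expr2.
Qed.

Lemma frob_ge0 : 0 <= \tr (Dp *m P *m Dp *m P).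
Proof. rewrite frobE; apply: sumr_ge0 => a _; apply: sumr_ge0 => b _; exact: sqr_ge0. Qed.

Lemma quad_boundP (y : 'cV[R]_N) : P *m y = y ->
  ((y^T *m Dp *m y) 0 0) ^+ 2 <=
  \tr (Dp *m P *m Dp *m P) * ((y^T *m y) 0 0) ^+ 2.
Proof.
move=> Py.
have E1 : y^T *m Dp *m y = y^T *m (P *m Dp *m P) *m y.
  rewrite -{1}Py -{2}Py trmx_mul Psy !mulmxA //.
rewrite E1 frobE quadE normE.
set M := P *m Dp *m P.
have CS := @cauchy_schwarz _ _ (fun a => y a 0) (fun a => (M *m y) a 0).
simpl in CS. apply: (le_trans CS).
have H : \sum_a (M *m y) a 0 ^+ 2 <= (\sum_a \sum_b M a b ^+ 2) * \sum_a y a 0 ^+ 2.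
  rewrite mulr_suml; apply: ler_sum => a _; rewrite mxE.
  exact: (@cauchy_schwarz _ _ (fun b => M a b) (fun b => y b 0)).
have H0 : 0 <= \sum_a y a 0 ^+ 2 by apply: sumr_ge0 => a _; exact: sqr_ge0.
move: H H0; set Y := \sum_a _; set Q := \sum_a _; set F := \sum_a _.
move=> H H0; nra.
Qed.

End Det.

Section Comb.
Variable R : realFieldType.
Variable n : nat.

Definition sgn (g : {ffun 'I_n -> bool}) j : R := if g j then 1 else -1.

Definition flip (i : 'I_n) (g : {ffun 'I_n -> bool}) : {ffun 'I_n -> bool} :=
  [ffun x => if x == i then ~~ g x else g x].

Lemma flipK i : involutive (flip i).
Proof. move=> g; apply/ffunP => x; rewrite !ffunE; case: (x == i) => //; exact: negbK. Qed.

Lemma sgn_flip i g x : sgn (flip i g) x = if x == i then - sgn g x else sgn g x.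
Proof. rewrite /sgn ffunE; case: (x == i) => //; case: (g x) => //=; by rewrite opprK. Qed.

Lemma sgn_sq g j : sgn g j * sgn g j = 1.
Proof. rewrite /sgn; case: (g j); by rewrite ?mulr1 ?mulrNN ?mulr1. Qed.

Lemma sum_flip0 (i a b c : 'I_n) : i != a -> i != b -> i != c ->
  \sum_(g : {ffun 'I_n -> bool}) sgn g i * sgn g a * sgn g b * sgn g c = 0.
Proof.
move=> ia ib ic.
set S := \sum_g _.
have E : S = - S.
  rewrite [in LHS]/S (reindex_inj (can_inj (flipK i))) /= -sumrN.
  have ai : (a == i) = false by rewrite eq_sym (negbTE ia).
  have bi : (b == i) = false by rewrite eq_sym (negbTE ib).
  have ci : (c == i) = false by rewrite eq_sym (negbTE ic).
  apply: eq_bigr => g _; rewrite !sgn_flip eqxx ai bi ci.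
  by rewrite !mulNr.
have : S + S = 0 by rewrite {1}E addNr.
move=> H; lra.
Qed.


Definition cond4 (j k l m : 'I_n) : bool := ((l == j) && (m == k)) || ((l == k) && (m == j)).

Lemma sum_g4 (j k l m : 'I_n) : j != k -> l != m ->
  \sum_(g : {ffun 'I_n -> bool}) sgn g j * sgn g k * sgn g l * sgn g m
  = (cond4 j k l m)%:R * #|{: {ffun 'I_n -> bool}}|%:R.
Proof.
move=> jk lm.
case C: (cond4 j k l m).
  rewrite mul1r -sumr_const; apply: eq_bigr => g _.
  case/orP: C => /andP [/eqP -> /eqP ->];
  (transitivity ((sgn g j * sgn g j) * (sgn g k * sgn g k)); [ring | by rewrite !sgn_sq mulr1]).
rewrite mul0r.
move/negbT: C; rewrite /cond4 negb_or !negb_and => /andP [C1 C2].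
have [jl|jl] := eqVneq j l.
  subst l.
  have km : k != m by move: C1; rewrite eqxx /= eq_sym.
  have kj : k != j by rewrite eq_sym.
  under eq_bigr do rewrite (mulrC (sgn _ j)).
  by apply: sum_flip0 => //.
have [jm|jm] := eqVneq j m.
  subst m.
  have kl : k != l by move: C2; rewrite eqxx orbF eq_sym.
  have kj : k != j by rewrite eq_sym.
  under eq_bigr do rewrite (mulrC (sgn _ j)).
  by apply: sum_flip0 => //.
by apply: sum_flip0.
Qed.
End Comb.

Section Hash.
Variable R : realFieldType.
Variables (n s' : nat).
Local Notation HT := {ffun 'I_n -> 'I_s'.+1}.

Definition shift (k : 'I_n) (c : 'I_s'.+1) (h : HT) : HT :=
  [ffun x => if x == k then h x + c else h x].

Lemma shift_inj k c : injective (shift k c).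
Proof.
move=> h1 h2 /ffunP E; apply/ffunP => x; have := E x; rewrite !ffunE.
by case: (x == k) => // /addIr.
Qed.

Lemma sum_delta (I : finType) (a : I) (F : I -> R) :
  \sum_i (i == a)%:R * F i = F a.
Proof.
rewrite (bigD1 a) //= eqxx mul1r big1 ?addr0 // => i /negbTE ->; by rewrite mul0r.
Qed.

Lemma sum_h (j k : 'I_n) : j != k ->
  \sum_(h : HT) ((h j == h k)%:R : R) = #|{: HT}|%:R / (s'.+1)%:R.
Proof.
move=> jk.
have E c : \sum_(h : HT) ((h j == h k)%:R : R) = \sum_(h : HT) ((h j == h k + c)%:R : R).
  rewrite (reindex_inj (@shift_inj k c)); apply: eq_bigr => h _.
  by rewrite !ffunE (negbTE jk) eqxx.
have E2 : (s'.+1)%:R * \sum_(h : HT) ((h j == h k)%:R : R) = #|{: HT}|%:R.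
  transitivity (\sum_(c : 'I_s'.+1) \sum_(h : HT) ((h j == h k + c)%:R : R)).
    rewrite -(eq_bigr _ (fun c _ => E c)) sumr_const card_ord.
    by rewrite mulr_natl.
  rewrite exchange_big /= -sumr_const; apply: eq_bigr => h _.
  transitivity (\sum_(c : 'I_s'.+1) (c == h j - h k)%:R * (1 : R)).
    apply: eq_bigr => c _; rewrite mulr1.
    have -> : (c == h j - h k) = (h j == h k + c) by rewrite eq_sym subr_eq [c + _]addrC.
    done.
  by rewrite sum_delta.
by rewrite -E2 [_ * \sum_h _]mulrC mulfK // pnatr_eq0.
Qed.
End Hash.

Section Sk.
Variable R : realFieldType.
Variables (n s' : nat).
Local Notation HT := {ffun 'I_n -> 'I_s'.+1}.
Local Notation GT := {ffun 'I_n -> bool}.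

Definition Dm (h : HT) (g : GT) : 'M[R]_n :=
  (@countsketch R s'.+1 n h g)^T *m @countsketch R s'.+1 n h g - 1%:M.

Lemma StS h g j k : ((@countsketch R s'.+1 n h g)^T *m @countsketch R s'.+1 n h g) j k
   = (h j == h k)%:R * (sgn R g j * sgn R g k).
Proof.
rewrite mxE (bigD1 (h j)) //= big1 ?addr0.
  rewrite !mxE eqxx [h k == h j]eq_sym /sgn; case: (h j == h k); by rewrite ?mul1r ?mulr0 ?mul0r.
move=> i /negbTE ni; rewrite !mxE eq_sym ni; by rewrite mul0r.
Qed.

Lemma DmE h g j k : Dm h g j k = ((j != k) && (h j == h k))%:R * (sgn R g j * sgn R g k).
Proof.
rewrite /Dm [LHS]mxE [X in _ + X]mxE StS mxE.
have [->|jk] := eqVneq j k; first by rewrite eqxx sgn_sq /= mulr1 subrr mul0r.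
by rewrite /= subr0.
Qed.

Lemma sum_DD (j k l m : 'I_n) :
  \sum_(h : HT) \sum_(g : GT) Dm h g j k * Dm h g l m =
  ((j != k) && cond4 j k l m)%:R * (#|{: HT}| * #|{: GT}|)%:R / (s'.+1)%:R.
Proof.
have [<-|jk] := eqVneq j k.
  by rewrite /= mul0r mul0r; apply: big1 => h _; apply: big1 => g _; rewrite DmE eqxx /= mul0r mul0r.
have [<-|lm] := eqVneq l m.
  have -> : cond4 j k l l = false.
    move/eqP: jk => jk.
    by rewrite /cond4; apply/negP => /orP [] /andP [/eqP E1 /eqP E2]; congruence.
  by rewrite /= !mul0r; apply: big1 => h _; apply: big1 => g _; rewrite (DmE h g l l) eqxx /= mul0r mulr0.
rewrite /=.
transitivity (\sum_(h : HT) ((h j == h k)%:R * (h l == h m)%:R) *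
     \sum_(g : GT) (sgn R g j * sgn R g k * sgn R g l * sgn R g m)).
  apply: eq_bigr => h _; rewrite mulr_sumr; apply: eq_bigr => g _.
  rewrite !DmE jk lm /=; ring.
rewrite sum_g4 //.
case C: (cond4 j k l m); last by rewrite (_ : false%:R = 0) // !mul0r; apply: big1 => h _; rewrite mulr0.
have E : forall h : HT, (h l == h m) = (h j == h k).
  move=> h; case/orP: C => /andP [/eqP -> /eqP ->] //; exact: eq_sym.
under eq_bigr do rewrite E -natrM mulnb andbb.
rewrite (_ : true%:R = 1) // !mul1r -mulr_suml sum_h // natrM.
by rewrite mulrAC.
Qed.
End Sk.

Section Ex.
Variable R : realFieldType.
Variables (n s' : nat).
Local Notation HT := {ffun 'I_n -> 'I_s'.+1}.
Local Notation GT := {ffun 'I_n -> bool}.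

Lemma trE (D K : 'M[R]_n) : \tr (D *m K *m D *m K) =
  \sum_j \sum_l \sum_k \sum_m D j k * K k l * D l m * K m j.
Proof.
rewrite /mxtrace; apply: eq_bigr => j _; rewrite mxE.
under eq_bigr do rewrite mxE mulr_suml.
rewrite exchange_big /=; apply: eq_bigr => l _.
under eq_bigr do (rewrite mxE mulr_suml mulr_suml).
rewrite exchange_big /=; apply: eq_bigr => k _.
by apply: eq_bigr => m _.
Qed.

Lemma cond4_split (j k l m : 'I_n) : j != k ->
  (cond4 j k l m)%:R = (l == j)%:R * (m == k)%:R + (l == k)%:R * (m == j)%:R :> R.
Proof.
move=> jk; rewrite /cond4.
have [->|lj] := eqVneq l j.
  by rewrite (negbTE jk) /= orbF (_ : true%:R = 1) // mul1r mul0r addr0.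
by rewrite /= (_ : false%:R = 0) // mul0r add0r -natrM mulnb.
Qed.

Lemma sumQ (K : 'M[R]_n) :
  \sum_(h : HT) \sum_(g : GT) \tr (Dm R h g *m K *m Dm R h g *m K) =
  (#|{: HT}| * #|{: GT}|)%:R / (s'.+1)%:R *
   \sum_j \sum_k (j != k)%:R * (K k j * K k j + K k k * K j j).
Proof.
under eq_bigr do under eq_bigr do rewrite trE.
rewrite pair_big /=.
under eq_bigr do under eq_bigr do rewrite exchange_big /=.
rewrite exchange_big /=; rewrite mulr_sumr; apply: eq_bigr => j _.
rewrite exchange_big /=; rewrite mulr_sumr; apply: eq_bigr => k _.
rewrite exchange_big /=.
transitivity (\sum_l \sum_m K k l * K m j *
   (\sum_(h : HT) \sum_(g : GT) Dm R h g j k * Dm R h g l m)).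
  apply: eq_bigr => l _.
  rewrite exchange_big /=; apply: eq_bigr => m _.
  rewrite pair_big /= mulr_sumr; apply: eq_bigr => p _; ring.
under eq_bigr do under eq_bigr do rewrite sum_DD.
have [<-|jk] := eqVneq j k.
  rewrite /= (_ : (false%:R : R) = 0) // !mul0r mulr0.
  apply: big1 => l _; apply: big1 => m _; by rewrite mulr0.
rewrite /= mul1r.
under eq_bigr do under eq_bigr do rewrite cond4_split //.
transitivity (\sum_l (l == j)%:R * \sum_m (m == k)%:R * (K k l * K m j *
      ((#|{: HT}| * #|{: GT}|)%:R / (s'.+1)%:R)) +
   \sum_l (l == k)%:R * \sum_m (m == j)%:R * (K k l * K m j *
      ((#|{: HT}| * #|{: GT}|)%:R / (s'.+1)%:R))).
  rewrite -big_split /=; apply: eq_bigr => l _.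
  rewrite !mulr_sumr -big_split /=; apply: eq_bigr => m _; ring.
set c := ((#|{: HT}| * #|{: GT}|)%:R / (s'.+1)%:R).
under eq_bigr => l _ do rewrite (sum_delta _ (fun m => K k l * K m j * c)).
under [X in _ + X]eq_bigr => l _ do rewrite (sum_delta _ (fun m => K k l * K m j * c)).
rewrite (sum_delta _ (fun l => K k l * K k j * c)).
rewrite (sum_delta _ (fun l => K k l * K j j * c)).
ring.
Qed.
End Ex.

Lemma Pentry_bound (R : realFieldType) N (P : 'M[R]_N) :
  P^T = P -> P *m P = P -> forall a b, P a b ^+ 2 <= P a a * P b b.
Proof.
move=> Psy Pid a b.
have E : forall x y, P x y = \sum_c P x c * P y c.
  move=> x y; rewrite -{1}Pid mxE; apply: eq_bigr => c _.
  by rewrite -{2}Psy mxE.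
rewrite (E a b) (E a a) (E b b).
have E2 : forall x, \sum_c P x c * P x c = \sum_c P x c ^+ 2.
  by move=> x; apply: eq_bigr => c _; rewrite expr2.
rewrite !E2; exact: (@cauchy_schwarz _ _ (fun c => P a c) (fun c => P b c)).
Qed.

Lemma sum_bound (R : realFieldType) n (K : 'M[R]_n) :
  (forall j k, K k j ^+ 2 <= K k k * K j j) ->
  \sum_j \sum_k (j != k)%:R * (K k j * K k j + K k k * K j j) <= 2 * (\tr K) ^+ 2.
Proof.
move=> HK; rewrite /mxtrace expr2 sum_prod mulr_sumr; apply: ler_sum => j _.
rewrite mulr_sumr; apply: ler_sum => k _.
have [<-|jk] := eqVneq j k.
  rewrite /= (_ : (false%:R : R) = 0) // mul0r.
  by rewrite -expr2 mulr_ge0 // sqr_ge0.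
rewrite /= (_ : (true%:R : R) = 1) // mul1r.
have := HK j k; rewrite expr2 => h; lra.
Qed.

Lemma unit_posdef (R : realFieldType) d (M : 'M[R]_d) :
  (forall v : 'cV_d, v != 0 -> 0 < (v^T *m M *m v) 0 0) -> M \in unitmx.
Proof.
move=> H; rewrite -row_free_unit -kermx_eq0; apply/eqP/row_matrixP => i.
rewrite row0; set x := row i (kermx M).
have xM : x *m M = 0 by rewrite /x -row_mul mulmx_ker row0.
apply/eqP; apply/negPn/negP => xn0.
have : x^T != 0 by rewrite trmx_eq0.
move/H; by rewrite trmxK xM mul0mx mxE ltxx.
Qed.

Lemma eig_range (R : realFieldType) (a w mu b : R) : 0 < a -> w^+2 <= a^+2/9 -> b = a + w -> a = mu * b -> 1/2 <= mu <= 3/2.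
Proof. move=> ha hw hb hm.
have h1 : w <= a/3 by nra.
have h2 : - (a/3) <= w by nra.
apply/andP; split; nra.
Qed.

Section Kap.
Local Open Scope classical_set_scope.
Lemma kappa_le (R : realType) d (A B : 'M[R]_d) :
  (forall mu, gen_eig A B mu -> 1/2 <= mu <= 3/2) -> gen_kappa A B <= 3.
Proof.
move=> H; rewrite /gen_kappa.
set E := image _ _.
have [ne|e0] := pselect (E !=set0); last first.
  have -> : E = set0 by apply/eqP; apply/negPn/negP => /set0P.
  by rewrite inf0 invr0 mulr0.
have ub : (ubound E) (3/2).
  move=> x [mu /H /andP [h1 h2] <-]; rewrite ger0_norm //; lra.
have lb : (lbound E) (1/2).
  move=> x [mu /H /andP [h1 h2] <-]; rewrite ger0_norm //; lra.
have hs := ge_sup ne ub.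
have hi := lb_le_inf ne lb.
have hi0 : 0 < inf E by lra.
rewrite ler_pdivrMr //; lra.
Qed.

End Kap.

Section Main.
Variable R : realType.
Variables (n d : nat) (Z : 'M[R]_(n, d)) (lam : R).
Hypothesis hlam : 0 <= lam.
Hypothesis hpos : 0 < lam \/ \rank Z = d.

Definition Ym : 'M[R]_d := (Num.sqrt lam)%:M.
Definition Cm : 'M[R]_(n + d, d) := col_mx Z Ym.
Definition Am : 'M[R]_d := Z^T *m Z + lam%:M.

Lemma CtC : Cm^T *m Cm = Am.
Proof.
rewrite /Cm tr_col_mx mul_row_col /Ym tr_scalar_mx -scalar_mxM -expr2 sqr_sqrtr //.
Qed.

Lemma quadC (v : 'cV[R]_d) : v^T *m Am *m v = (Cm *m v)^T *m (Cm *m v).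
Proof. by rewrite -CtC trmx_mul !mulmxA. Qed.

Lemma posdef (v : 'cV[R]_d) : v != 0 -> 0 < (v^T *m Am *m v) 0 0.
Proof.
move=> vn0; rewrite quadC normE.
rewrite lt_def sumr_ge0 ?andbT; last by move=> a _; exact: sqr_ge0.
apply/negP => /eqP S0.
have Cv0 : Cm *m v = 0.
  apply/matrixP => a b; rewrite ord1 [RHS]mxE.
  have H0 := @psumr_eq0P _ _ predT (fun a => (Cm *m v) a 0 ^+ 2) (fun c _ => sqr_ge0 _) S0.
  by move/eqP: (H0 a isT); rewrite sqrf_eq0 => /eqP.
move: Cv0; rewrite /Cm mul_col_mx => /eqP; rewrite col_mx_eq0 => /andP [/eqP Zv /eqP Yv].
case: hpos => [lp|rk].
  move: Yv; rewrite /Ym mul_scalar_mx => /eqP; rewrite scalemx_eq0 (negbTE vn0) orbF.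
  by rewrite gt_eqF // sqrtr_gt0.
move: vn0; rewrite -trmx_eq0 -(mulmx_free_eq0 _ (B := Z^T)).
  by rewrite -trmx_mul Zv trmx0 eqxx.
by rewrite /row_free mxrank_tr rk.
Qed.

Lemma AU : Cm^T *m Cm \in unitmx.
Proof. rewrite CtC; apply: unit_posdef; exact: posdef. Qed.

Definition Pm := proj Cm.
Definition Km : 'M[R]_n := ulsubmx Pm.

Lemma K_bound j k : Km k j ^+ 2 <= Km k k * Km j j.
Proof.
have E : forall x y, Km x y = Pm (lshift d x) (lshift d y).
  by move=> x y; rewrite /Km mxE mxE.
rewrite !E; apply: Pentry_bound; [exact: Psym Cm | exact: PP AU].
Qed.

Lemma trK : \tr Km = stat_dim Z lam.
Proof.
rewrite /Km /Pm /proj CtC /Cm tr_col_mx mul_col_mx mul_col_row block_mxKul.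
by rewrite /stat_dim mxtrace_mulC mulmxA mxtrace_mulC.
Qed.

Definition Dp (D : 'M[R]_n) : 'M[R]_(n + d) := block_mx D 0 0 0.

Lemma W_eq D : Cm^T *m Dp D *m Cm = Z^T *m D *m Z.
Proof.
rewrite /Cm /Dp tr_col_mx mul_row_block !mulmx0 !addr0 mul_row_col mul0mx addr0.
done.
Qed.

Lemma Q_eq D : \tr (Dp D *m Pm *m Dp D *m Pm) = \tr (D *m Km *m D *m Km).
Proof.
rewrite /Dp -[Pm](submxK Pm) !mulmx_block !mul0mx !mulmx0 !addr0 ?add0r.
by rewrite mxtrace_block !mul0mx !addr0 mxtrace0 addr0.
Qed.

Lemma Dp_sym D : D^T = D -> (Dp D)^T = Dp D.
Proof. by move=> DS; rewrite /Dp tr_block_mx DS !trmx0. Qed.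


Variable s' : nat.
Local Notation HT := {ffun 'I_n -> 'I_s'.+1}.
Local Notation GT := {ffun 'I_n -> bool}.

Definition Sm (h : HT) (g : GT) := @countsketch R s'.+1 n h g.
Definition Qf (h : HT) (g : GT) := \tr (Dm R h g *m Km *m Dm R h g *m Km).

Lemma Dm_sym (h : HT) (g : GT) : (Dm R h g)^T = Dm R h g.
Proof. by rewrite /Dm linearB /= trmx_mul trmxK trmx1. Qed.

Lemma B_eq (h : HT) (g : GT) : Z^T *m (Sm h g)^T *m Sm h g *m Z + lam%:M = Am + Z^T *m Dm R h g *m Z.
Proof.
rewrite /Am /Dm mulmxBr mulmxBl mulmx1 !mulmxA.
set X := (X in X + lam%:M = _).
by rewrite addrAC [Z^T *m Z + _]addrC subrK.
Qed.

Lemma Qf_ge0 (h : HT) (g : GT) : 0 <= Qf h g.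
Proof. rewrite /Qf -Q_eq; apply: frob_ge0; [exact: Dp_sym (Dm_sym h g) | exact: Psym Cm | exact: PP AU]. Qed.

Lemma good (h : HT) (g : GT) : Qf h g <= 1/9 -> good_event Z lam (Sm h g).
Proof.
move=> hQ.
have key : forall v : 'cV_d, v != 0 ->
    0 < (v^T *m Am *m v) 0 0 /\
    ((v^T *m (Z^T *m Dm R h g *m Z) *m v) 0 0) ^+ 2 <= ((v^T *m Am *m v) 0 0) ^+ 2 / 9.
  move=> v vn0; split; first exact: posdef.
  have Py : Pm *m (Cm *m v) = Cm *m v by rewrite mulmxA (PC AU).
  have := quad_boundP (Dp_sym (Dm_sym h g)) (Psym Cm) (PP AU) Py.
  have E1 : (Cm *m v)^T *m Dp (Dm R h g) *m (Cm *m v) = v^T *m (Z^T *m Dm R h g *m Z) *m v.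
    by rewrite -W_eq trmx_mul !mulmxA.
  rewrite E1 -quadC -/Pm Q_eq -/(Qf h g).
  have a2 : 0 <= ((v^T *m Am *m v) 0 0) ^+ 2 by exact: sqr_ge0.
  move=> H; apply: (le_trans H).
  move: a2 hQ; set q := Qf h g; set x := (_ ^+ 2) => a2 hQ; nra.
have eig : forall mu, gen_eig (Z^T *m Z + lam%:M)
      (Z^T *m (Sm h g)^T *m Sm h g *m Z + lam%:M) mu -> 1/2 <= mu <= 3/2.
  move=> mu [v [vn0 Hv]].
  have [ha hw] := key v vn0.
  apply: (eig_range ha hw (b := (v^T *m (Z^T *m (Sm h g)^T *m Sm h g *m Z + lam%:M) *m v) 0 0)).
    by rewrite B_eq mulmxDr mulmxDl mxE.
  by rewrite -mulmxA -[Am]/(Z^T *m Z + lam%:M) Hv -scalemxAr mxE mulmxA.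
split => //; last exact: kappa_le.
apply: unit_posdef => v vn0.
have [ha hw] := key v vn0.
rewrite B_eq mulmxDr mulmxDl mxE.
move: ha hw; set a := (_ 0 0); set w := (_ 0 0) => ha hw.
nra.
Qed.

End Main.

Unset Implicit Arguments.

Theorem lemma3p1 (R : realType) (n d s : nat) (Z : 'M[R]_(n, d)) (lam delta : R) :
  0 <= lam ->
  (0 < lam \/ \rank Z = d) ->
  0 < delta < 1 ->
  (0 < s)%N ->
  20 * (stat_dim Z lam) ^+ 2 / delta <= s%:R ->
  1 - delta <= @countsketch_prob R n s
                 (fun h g => good_event Z lam (@countsketch R s n h g)).
Proof.
move=> hlam hpos /andP [d0 d1] hs hsd.
case: s hs hsd => [//|s'] _ hsd.
set t := stat_dim Z lam.
rewrite /countsketch_prob.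
set bad := [set p : {ffun 'I_n -> 'I_s'.+1} * {ffun 'I_n -> bool} | 1/9 < Qf Z lam p.1 p.2].
set gd := [set hg : {ffun 'I_n -> 'I_s'.+1} * {ffun 'I_n -> bool} |
      asbool (good_event Z lam (@countsketch R s'.+1 n hg.1 hg.2))].
set N := #|{: {ffun 'I_n -> 'I_s'.+1} * {ffun 'I_n -> bool}}|.
have N0 : (0 < N)%N by apply/card_gt0P; exists ([ffun=> ord0], [ffun=> true]).
have S1 : \sum_(p : {ffun 'I_n -> 'I_s'.+1} * {ffun 'I_n -> bool}) Qf Z lam p.1 p.2 <= N%:R / (s'.+1)%:R * (2 * t ^+ 2).
  have -> : \sum_(p : {ffun 'I_n -> 'I_s'.+1} * {ffun 'I_n -> bool}) Qf Z lam p.1 p.2 =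
     \sum_(h : {ffun 'I_n -> 'I_s'.+1}) \sum_(g : {ffun 'I_n -> bool}) Qf Z lam h g.
    by rewrite (pair_bigA _ (fun h g => Qf Z lam h g)).
  rewrite /Qf sumQ /N card_prod /t -(trK Z hlam).
  apply: ler_wpM2l; first by rewrite divr_ge0 // ler0n.
  apply: sum_bound => j k; exact: (K_bound hlam hpos).
(* Markov *)
have S2 : #|bad|%:R / 9 <= \sum_(p : {ffun 'I_n -> 'I_s'.+1} * {ffun 'I_n -> bool}) Qf Z lam p.1 p.2.
  rewrite (bigID (fun p => p \in bad)) /=.
  have -> : #|bad|%:R / 9 = \sum_(p | p \in bad) (1/9 : R).
    by rewrite sumr_const -[RHS]mulr_natl div1r.
  apply: (le_trans (y := \sum_(p in bad) Qf Z lam p.1 p.2)).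
    by apply: ler_sum => p; rewrite inE => /ltW.
  by rewrite lerDl; apply: sumr_ge0 => p _; exact: Qf_ge0.
have S3 : (#|~: bad| <= #|gd|)%N.
  apply: subset_leq_card; apply/fintype.subsetP => p; rewrite !inE -leNgt => hp.
  exact: (good hlam hpos hp).
have S4 : (#|bad| + #|~: bad| = N)%N by rewrite cardsC.
have S5 : N%:R - #|bad|%:R <= #|gd|%:R :> R.
  rewrite -S4 natrD addrC addKr ler_nat //.
have ht : t ^+ 2 <= (s'.+1)%:R * delta / 20.
  move: hsd; rewrite ler_pdivrMr // => h; lra.
have S6 : N%:R / (s'.+1)%:R * (2 * t ^+ 2) <= N%:R * delta / 10 :> R.
  have sp : 0 < (s'.+1)%:R :> R by rewrite ltr0n.
  have Np : 0 <= N%:R :> R by rewrite ler0n.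
  apply: (le_trans (y := N%:R / (s'.+1)%:R * (2 * ((s'.+1)%:R * delta / 20)))).
    apply: ler_wpM2l; first by rewrite divr_ge0 // ltW.
    lra.
  rewrite le_eqVlt; apply/orP; left; apply/eqP; field.
  have hs0 : 0 <= s'%:R :> R by rewrite ler0n.
  apply/eqP; lra.
have Np : 0 <= N%:R :> R by rewrite ler0n.
have F : (1 - delta) * N%:R <= #|gd|%:R.
  move: S1 S2 S5 S6; set B := #|bad|%:R; set G := #|gd|%:R; set Q := \sum_p _.
  move=> S1 S2 S5 S6.
  have h := le_trans S2 (le_trans S1 S6).
  have hNd : 0 <= N%:R * delta by rewrite mulr_ge0 // ltW.
  have hB : B <= N%:R * delta by move: h; rewrite ler_pdivrMr //; lra.
  have -> : (1 - delta) * N%:R = N%:R - N%:R * delta by ring.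
  lra.
move: F; rewrite -ler_pdivlMr ?ltr0n //.
Qed.
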